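(* For a liner $X$ the following are equivalent: (1) $X$ is weakly modular; (2) $X$ is ranked and weakly regular; (3) $X$ is ranked and for any planes $P,\Pi\subseteq X$ with $\|P\cup\Pi\|=4$, the intersection $P\cap\Pi$ is not a singleton.
   Context: A liner is a set $X$ of points with a family of subsets called lines such that any two distinct points lie in a unique line and every line contains at least two points. For distinct $x,y$, $\overline{xy}$ is the line through them. A set is flat if it contains $\overline{xy}$ for all its distinct points $x,y$; $\overline A$ is the smallest flat containing $A$. The rank $\|A\|$ is the smallest cardinality of $B\subseteq X$ with $A\subseteq\overline B$. A plane is a flat of rank $3$. $X$ is ranked if any two flats $A\subseteq B$ with $\|A\|=\|B\|<\omega$ are equal. $X$ is weakly modular if $\|A\cap B\|+\|A\cup B\|=\|A\|+\|B\|$ for all flats $A,B\subseteq X$ with $A\cap B\neq\varnothing$. $X$ is weakly regular if for every flat $A\subseteq X$ and points $a\in A$, $b\in X\setminus A$ we have $\overline{A\cup\{b\}}=\bigcup_{x\in A}\overline{\{a,b,x\}}$. *)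

(* Defs.v *)
From mathcomp Require Import all_boot.
From mathcomp Require Import boolp classical_sets functions cardinality.
Set Implicit Arguments. Unset Strict Implicit. Unset Printing Implicit Defensive.
Local Open Scope classical_set_scope.
Local Open Scope card_scope.

Section Liner.
Variable X : Type.

Definition is_liner (L : set (set X)) : Prop :=
  (forall x y : X, x <> y ->
     exists l, [/\ L l, l x, l y &
       forall l', L l' -> l' x -> l' y -> l' = l]) /\
  (forall l, L l -> exists x y, [/\ x <> y, l x & l y]).

(* the line through distinct x, y : the unique line containing both *)
Definition line_through (L : set (set X)) (x y : X) : set X :=
  \bigcup_(l in [set l | [/\ L l, l x & l y]]) l.

Definition flat (L : set (set X)) (A : set X) : Prop :=
  forall x y, A x -> A y -> x <> y -> line_through L x y `<=` A.

Definition hull (L : set (set X)) (A : set X) : set X :=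
  [set z | forall F, flat L F -> A `<=` F -> F z].

(* B is a generating set of A of least cardinality, i.e. its cardinality is
   the rank ||A|| (smallest cardinality of B with A ⊆ hull B) *)
Definition min_gen (L : set (set X)) (A B : set X) : Prop :=
  A `<=` hull L B /\ (forall C, A `<=` hull L C -> B #<= C).

Definition has_rank (L : set (set X)) (A : set X) (n : nat) : Prop :=
  exists B, min_gen L A B /\ B #= `I_n.

(* cardinal sum of two subsets of X: cardinality of their disjoint union *)
Definition dsum (A B : set X) : set (X + X) :=
  (inl @` A) `|` (inr @` B).

Definition plane (L : set (set X)) (P : set X) : Prop :=
  flat L P /\ has_rank L P 3.

Definition ranked (L : set (set X)) : Prop :=
  forall A B n, flat L A -> flat L B -> A `<=` B ->
    has_rank L A n -> has_rank L B n -> A = B.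

(* ||A ∩ B|| + ||A ∪ B|| = ||A|| + ||B|| as cardinals *)
Definition weakly_modular (L : set (set X)) : Prop :=
  forall A B, flat L A -> flat L B -> A `&` B !=set0 ->
    exists G1 G2 G3 G4,
      [/\ min_gen L (A `&` B) G1, min_gen L (A `|` B) G2,
          min_gen L A G3, min_gen L B G4 &
          dsum G1 G2 #= dsum G3 G4].

Definition weakly_regular (L : set (set X)) : Prop :=
  forall A a b, flat L A -> A a -> ~ A b ->
    hull L (A `|` [set b]) = \bigcup_(x in A) hull L [set a; b; x].

End Liner.

(* Main.v *)
Require Import Defs.
From mathcomp Require Import all_boot zify.
From mathcomp Require Import boolp classical_sets functions cardinality.
Set Implicit Arguments. Unset Strict Implicit. Unset Printing Implicit Defensive.
Local Open Scope classical_set_scope.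
Local Open Scope card_scope.

Section Basics.
Variable X : Type.
Variable L : set (set X).
Hypothesis HL : is_liner L.

Lemma sub_hull (A : set X) : A `<=` hull L A.
Proof. by move=> x Ax F _ AF; apply: AF. Qed.

Lemma hull_min (A F : set X) : flat L F -> A `<=` F -> hull L A `<=` F.
Proof. by move=> fF AF z; apply. Qed.

Lemma flat_hull (A : set X) : flat L (hull L A).
Proof.
move=> x y hx hy xy z zl F fF AF.
exact: (fF x y (hx F fF AF) (hy F fF AF) xy z zl).
Qed.

Lemma hull_mono (A B : set X) : A `<=` B -> hull L A `<=` hull L B.
Proof. by move=> AB; apply: hull_min; [exact: flat_hull| move=> z Az; apply: sub_hull; exact: AB]. Qed.

Lemma hull_flat (F : set X) : flat L F -> hull L F = F.
Proof. by move=> fF; apply/seteqP; split; [exact: hull_min|exact: sub_hull]. Qed.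

Lemma hull_hull (A : set X) : hull L (hull L A) = hull L A.
Proof. by apply: hull_flat; exact: flat_hull. Qed.

Lemma hull_sub_hull (A B : set X) : A `<=` hull L B -> hull L A `<=` hull L B.
Proof. by move=> AB; apply: hull_min => //; exact: flat_hull. Qed.

Lemma hullUl (A B : set X) : hull L (hull L A `|` B) = hull L (A `|` B).
Proof.
apply/seteqP; split.
  apply: hull_sub_hull => z [/(hull_mono (@subsetUl _ A B))//|Bz].
  by apply: sub_hull; right.
by apply: hull_mono => z [Az|Bz]; [left; exact: sub_hull|right].
Qed.

Lemma flat0 : flat L set0.
Proof. by move=> x y []. Qed.

Lemma flat1 (a : X) : flat L [set a].
Proof. by move=> x y -> -> []. Qed.

Lemma hull0 : hull L set0 = set0.
Proof. by apply: hull_flat; exact: flat0. Qed.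

Lemma hull1 a : hull L [set a] = [set a].
Proof. by apply: hull_flat; exact: flat1. Qed.

Lemma flatI (A B : set X) : flat L A -> flat L B -> flat L (A `&` B).
Proof.
move=> fA fB x y [Ax Bx] [Ay By] xy z zl; split.
  exact: (fA x y Ax Ay xy).
exact: (fB x y Bx By xy).
Qed.

Lemma line_flat l : L l -> flat L l.
Proof.
move=> Ll x y lx ly xy z [l' [Ll' l'x l'y] l'z].
have [l0 [_ _ _ u]] := HL.1 x y xy.
by rewrite (u l) // -(u l').
Qed.

Lemma hull2_line l a b : L l -> l a -> l b -> a <> b -> hull L [set a; b] = l.
Proof.
move=> Ll la lb ab; apply/seteqP; split.
  by apply: hull_min; [exact: line_flat|move=> z [->|->]].
move=> z lz F fF abF.
by apply: (fF a b (abF a (or_introl erefl)) (abF b (or_intror erefl)) ab); exists l.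
Qed.

Lemma line_exists a b : a <> b -> exists l, [/\ L l, l a & l b].
Proof. by move=> /(HL.1)[l [Ll la lb _]]; exists l. Qed.

Lemma hull2_flat a b : a <> b -> flat L (hull L [set a; b]).
Proof. by move=> _; exact: flat_hull. Qed.

Lemma hull2_swap a b c : a <> b -> a <> c -> hull L [set a; b] c ->
  hull L [set a; c] = hull L [set a; b].
Proof.
move=> ab ac; have [l [Ll la lb]] := line_exists ab.
rewrite (hull2_line Ll la lb ab) => lc.
by rewrite (hull2_line Ll la lc ac).
Qed.

Lemma hull_finitary (A : set X) z : hull L A z ->
  exists F, [/\ finite_set F, F `<=` A & hull L F z].
Proof.
pose U := [set z | exists F, [/\ finite_set F, F `<=` A & hull L F z]].
suff : hull L A `<=` U by move=> /[apply].
apply: hull_min.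
  move=> x y [F1 [f1 s1 h1]] [F2 [f2 s2 h2]] xy w wl.
  exists (F1 `|` F2); split; first by rewrite finite_setU.
    by move=> t [/s1|/s2].
  apply: (flat_hull (x:=x) (y:=y)) => //.
    exact: (hull_mono (@subsetUl _ F1 F2)).
  exact: (hull_mono (@subsetUr _ F1 F2)).
move=> a Aa; exists [set a]; split; first exact: finite_set1.
  by move=> t ->.
by rewrite hull1.
Qed.

End Basics.
Arguments flat_hull {X} L A.
Arguments flat0 {X} L.
Arguments flat1 {X} L a.
Arguments line_flat {X L} HL l.

Section Card.

Lemma inj_le T U (A : set T) (B : set U) (f : T -> U) :
  (forall x, A x -> B (f x)) -> {in A &, injective f} -> A #<= B.
Proof.
move=> fAB finj; apply/card_subP; exists (f @` A); first exact: inj_card_eq.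
by move=> _ [x Ax <-]; apply: fAB.
Qed.

Lemma le_inj_nat T (A : set T) (B : set nat) : A #<= B ->
  exists f : T -> nat, (forall x, A x -> B (f x)) /\ {in A &, injective f}.
Proof.
by move=> /pcard_leP/injfunPex[f ff fi]; exists f.
Qed.

Lemma eq_bij_nat T (A : set T) (B : set nat) : A #= B ->
  exists f : T -> nat, set_bij A B f.
Proof. by move=> /card_set_bijP. Qed.

Lemma inf_ge T (C : set T) n : ~ finite_set C -> `I_n #<= C.
Proof.
move=> /infiniteP H; apply: card_le_trans H.
by apply: subset_card_le.
Qed.

Lemma cardU1 T (A : set T) p n : A #<= `I_n -> p |` A #<= `I_n.+1.
Proof.
move=> /le_inj_nat[f [fA fi]].
pose g x := if `[< x = p >] then n else f x.
apply: (inj_le (f := g)).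
  move=> x /= [->|Ax]; rewrite /g.
    by case: asboolP.
  case: asboolP => _ //; have := fA x Ax => /=; exact: ltnW.
move=> x y; rewrite !inE /g => Ax Ay.
case: asboolP => [-> |xp]; case: asboolP => [-> //|yp].
- case: Ay => [//|Ay]; have := fA y Ay => /= + e; by rewrite -e ltnn.
- case: Ax => [//|Ax]; have := fA x Ax => /= + e; by rewrite e ltnn.
- case: Ax => [//|Ax]; case: Ay => [//|Ay].
  by apply: fi; rewrite inE.
Qed.

Lemma cardU1r T (A : set T) p n : A #<= `I_n -> A `|` [set p] #<= `I_n.+1.
Proof. by rewrite setUC; exact: cardU1. Qed.

Lemma card1le T (a : T) : [set a] #<= `I_1.
Proof. by have /card_eqPle[] := @card_set1 _ a. Qed.

Lemma card_le1 T (A : set T) : A #<= `I_1 -> forall x y, A x -> A y -> x = y.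
Proof.
move=> /le_inj_nat[f [fA fi]] x y Ax Ay.
apply: fi; rewrite ?inE //.
by have := fA x Ax; have := fA y Ay => /=; rewrite !ltnS !leqn0 => /eqP -> /eqP ->.
Qed.

Lemma card_le0 T (A : set T) : A #<= `I_0 -> A = set0.
Proof.
move=> /le_inj_nat[f [fA _]]; apply/seteqP; split => // x Ax.
by have := fA x Ax.
Qed.

Lemma dsum_card T (A B : set T) m n : A #= `I_m -> B #= `I_n ->
  dsum A B #= `I_(m + n).
Proof.
move=> /eq_bij_nat[f [fA fi fs]] /eq_bij_nat[g [gA gi gs]].
pose h (s : T + T) := match s with inl x => f x | inr y => m + g y end.
have hi : {in dsum A B &, injective h}.
  move=> [x|x] [y|y]; rewrite !inE /dsum /=.
  - move=> [[x' Ax' [<-]]|[? _ //]] [[y' Ay' [<-]]|[? _ //]] e.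
    by congr inl; apply: fi; rewrite ?inE.
  - move=> [[x' Ax' [<-]]|[? _ //]] [[? _ //]|[y' Ay' [<-]]] e.
    by have := fA x' Ax'; rewrite /= e ltnNge leq_addr.
  - move=> [[? _ //]|[x' Ax' [<-]]] [[y' Ay' [<-]]|[? _ //]] e.
    by have := fA y' Ay'; rewrite /= -e ltnNge leq_addr.
  - move=> [[? _ //]|[x' Ax' [<-]]] [[? _ //]|[y' Ay' [<-]]] /eqP.
    rewrite eqn_add2l => /eqP e.
    by congr inr; apply: gi; rewrite ?inE.
have := inj_card_eq hi; rewrite card_eq_sym => /card_eq_trans; apply.
have -> : h @` dsum A B = `I_(m + n); last exact: card_eqxx.
apply/seteqP; split.
  move=> _ [s Ds <-]; case: Ds => [[x' Ax' <-]|[x' Ax' <-]] /=.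
    by have := fA x' Ax' => /= H; apply: (leq_trans H); exact: leq_addr.
  by have := gA x' Ax'; rewrite /= ltn_add2l.
move=> k /= kmn; case: (ltnP k m) => km.
  have [x Ax fx] := fs k km; exists (inl x); first by left; exists x.
  by [].
have [|y By gy] := gs (k - m).
  by rewrite /= ltn_subLR.
by exists (inr y); [right; exists y|rewrite /= gy subnKC].
Qed.

End Card.

Section Rank.
Variable X : Type.
Variable L : set (set X).

Definition rkle (A : set X) n := exists B, A `<=` hull L B /\ B #<= `I_n.

Lemma has_rankP A n :
  has_rank L A n <-> rkle A n /\ forall m, rkle A m -> (n <= m)%N.
Proof.
split.
  move=> [B [[AB Bmin] Bn]]; move/card_eqPle: (Bn) => [Bn1 Bn2].
  split; first by exists B.
  move=> m [C [AC Cm]]; rewrite -card_le_II.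
  apply: card_le_trans Bn2 _; apply: card_le_trans Cm; exact: Bmin.
move=> [[B [AB Bn]] nmin].
have /finite_setP[k Bk] : finite_set B by apply: card_le_finite Bn _; exists n.
have kn : (k <= n)%N by rewrite -card_le_II -(card_le_eql Bk).
have nk : (n <= k)%N by apply: nmin; exists B; split => //; have /card_eqPle[] := Bk.
have {kn nk} ekn : k = n by apply/eqP; rewrite eqn_leq kn nk.
subst k; exists B; split => //; split => // C AC.
have [/finite_setP[j Cj]|Cinf] := pselect (finite_set C).
  have nj : (n <= j)%N by apply: nmin; exists C; split => //; have /card_eqPle[] := Cj.
  rewrite (card_le_eql Bk) (card_le_eqr Cj) card_le_II //.
by rewrite (card_le_eql Bk); apply: inf_ge.
Qed.

Lemma rank_ex A n : rkle A n -> exists m, has_rank L A m /\ (m <= n)%N.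
Proof.
move=> An.
have ex : exists m, `[< rkle A m >] by exists n; apply/asboolP.
case: (ex_minnP ex) => m /asboolP Am mmin.
exists m; split; last by apply: mmin; apply/asboolP.
apply/has_rankP; split => // j Aj; apply: mmin; exact/asboolP.
Qed.

Lemma rank_uniq A n m : has_rank L A n -> has_rank L A m -> n = m.
Proof.
move=> /has_rankP[An nmin] /has_rankP[Am mmin].
by apply/eqP; rewrite eqn_leq nmin // mmin.
Qed.

Lemma min_gen_card A n G : has_rank L A n -> min_gen L A G -> G #= `I_n.
Proof.
move=> [B [[AB Bmin] Bn]] [AG Gmin].
rewrite card_eq_sym; apply: card_eq_trans (card_esym Bn) _.
by apply: Cantor_Bernstein; [exact: Bmin|exact: Gmin].
Qed.

Lemma rkle_mono A B n : A `<=` B -> rkle B n -> rkle A n.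
Proof. by move=> AB [C [BC Cn]]; exists C; split => //; exact: subset_trans BC. Qed.

Lemma rkle_hull A n : rkle A n -> rkle (hull L A) n.
Proof. by move=> [C [AC Cn]]; exists C; split => //; exact: hull_sub_hull. Qed.

Lemma rkle_hullE A n : rkle (hull L A) n -> rkle A n.
Proof. by apply: rkle_mono; exact: sub_hull. Qed.

Lemma rkle_U1 A p n : rkle A n -> rkle (p |` A) n.+1.
Proof.
move=> [C [AC Cn]]; exists (p |` C); split; last exact: cardU1.
move=> z [->|Az]; first by apply: sub_hull; left.
by apply: (hull_mono (@subsetUr _ [set p] C)); exact: AC.
Qed.

Lemma rkle_set S n : S #<= `I_n -> rkle S n.
Proof. by move=> Sn; exists S; split => //; exact: sub_hull. Qed.

Lemma rank_mono A B n m : A `<=` B -> has_rank L A n -> has_rank L B m -> (n <= m)%N.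
Proof.
move=> AB /has_rankP[_ nmin] /has_rankP[Bm _].
by apply: nmin; exact: rkle_mono Bm.
Qed.

Lemma rank_le A n m : has_rank L A n -> rkle A m -> (n <= m)%N.
Proof. by move=> /has_rankP[_ H]; apply: H. Qed.

Lemma rank_hull A n : has_rank L A n -> has_rank L (hull L A) n.
Proof.
move=> /has_rankP[An nmin]; apply/has_rankP; split; first exact: rkle_hull.
by move=> m /rkle_hullE; apply: nmin.
Qed.

Lemma rank_hullE A n : has_rank L (hull L A) n -> has_rank L A n.
Proof.
move=> /has_rankP[An nmin]; apply/has_rankP; split; first exact: rkle_hullE.
by move=> m /rkle_hull; apply: nmin.
Qed.

Lemma rkle_rank A n : rkle A n -> exists m, has_rank L A m.
Proof. by move=> /rank_ex[m [? _]]; exists m. Qed.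

Hypothesis HL : is_liner L.

Lemma rank0 : has_rank L set0 0.
Proof.
apply/has_rankP; split; last by [].
by exists set0; split => //.
Qed.

Lemma rank1 a : has_rank L [set a] 1.
Proof.
apply/has_rankP; split; first by apply: rkle_set; exact: card1le.
move=> m [C [aC Cn]]; case: m Cn => [|m] // /card_le0 C0.
by move: (aC a erefl); rewrite C0 hull0.
Qed.

Lemma rank2 a b : a <> b -> has_rank L (hull L [set a; b]) 2.
Proof.
move=> ab; apply/has_rankP; split.
  apply: rkle_hull; apply: rkle_set.
  by apply: cardU1; exact: card1le.
move=> m [C [aC Cn]]; case: m Cn => [|[|m]] Cn //.
  by move: (aC a (sub_hull (or_introl erefl))); rewrite (card_le0 Cn) hull0.
have [[c Cc]|nC] := pselect (exists c, C c); last first.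
  have C0 : C = set0 by apply/seteqP; split => // z Cz; apply: nC; exists z.
  by move: (aC a (sub_hull (or_introl erefl))); rewrite C0 hull0.
have C1 : C = [set c].
  apply/seteqP; split=> [z Cz|z ->//]; exact: card_le1 Cn z c Cz Cc.
move: (aC a (sub_hull (or_introl erefl))) (aC b (sub_hull (or_intror erefl))).
by rewrite C1 hull1 => ac bc; exfalso; apply: ab; rewrite ac bc.
Qed.

End Rank.

Section Ranked.
Variable X : Type.
Variable L : set (set X).
Hypothesis HL : is_liner L.
Hypothesis Hr : ranked L.

Lemma hullUr (A B : set X) : hull L (A `|` hull L B) = hull L (A `|` B).
Proof. by rewrite setUC hullUl setUC. Qed.

Lemma rank_add F k p : flat L F -> has_rank L F k -> ~ F p ->
  has_rank L (hull L (p |` F)) k.+1.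
Proof.
move=> fF Fk Fp.
have r1 : rkle L (hull L (p |` F)) k.+1.
  by apply: rkle_hull; apply: rkle_U1; case/has_rankP: Fk.
have [m [hm mk]] := rank_ex r1.
have km : (k <= m)%N.
  apply: rank_mono Fk hm => z Fz; apply: sub_hull; by right.
have [emk|nmk] := eqVneq m k.
  subst m; exfalso; apply: Fp.
  have sub : F `<=` hull L (p |` F) by move=> z Fz; apply: sub_hull; right.
  rewrite (Hr fF (flat_hull L _) sub Fk hm); apply: sub_hull; by left.
have -> : k.+1 = m by move/eqP: nmk; lia.
exact: hm.
Qed.

Lemma finite_rkle (S : set X) : finite_set S -> exists n, rkle L S n.
Proof.
by move=> /finite_setP[n Sn]; exists n; apply: rkle_set; have /card_eqPle[] := Sn.
Qed.

Lemma hull_U1_in (S : set X) x : hull L S x -> hull L (x |` S) = hull L S.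
Proof.
move=> Sx; apply/seteqP; split; last by apply: hull_mono => z Sz; right.
by apply: hull_sub_hull => z [->|Sz] //; exact: sub_hull.
Qed.

Lemma exchange_fin (S : set X) x y : finite_set S ->
  hull L (x |` S) y -> ~ hull L S y -> hull L (y |` S) x.
Proof.
move=> /finite_rkle[n Sn] hxy nhy.
have [k [Sk _]] := rank_ex Sn.
have hSk := rank_hull Sk.
have nx : ~ hull L S x by move=> Sx; apply: nhy; rewrite -(hull_U1_in Sx).
have rx := rank_add (flat_hull L _) hSk nx.
have ry := rank_add (flat_hull L _) hSk nhy.
rewrite hullUr in rx; rewrite hullUr in ry.
have sub : hull L (y |` S) `<=` hull L (x |` S).
  apply: hull_sub_hull => z [->//|Sz]; apply: sub_hull; by right.
rewrite (Hr (flat_hull L _) (flat_hull L _) sub ry rx).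
by apply: sub_hull; left.
Qed.

Lemma exchange (S : set X) x y :
  hull L (x |` S) y -> ~ hull L S y -> hull L (y |` S) x.
Proof.
move=> hxy nhy; have [F [fF FS hF]] := hull_finitary hxy.
have fF' : finite_set (F `&` S) by apply: finite_setIl.
have h1 : hull L (x |` (F `&` S)) y.
  apply: (hull_mono _ hF) => z Fz; have [->|Sz] := FS z Fz; first by left.
  by right.
have h2 : ~ hull L (F `&` S) y.
  by move=> H; apply: nhy; apply: (hull_mono _ H) => z [].
have := exchange_fin fF' h1 h2; apply: hull_mono => z [->|[_ Sz]]; by [left|right].
Qed.

End Ranked.

Section Geom.
Variable X : Type.
Variable L : set (set X).
Hypothesis HL : is_liner L.

Lemma dsum_nat (G1 G2 G3 G4 : set X) a b c d :
  G1 #= `I_a -> G2 #= `I_b -> G3 #= `I_c -> G4 #= `I_d ->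
  dsum G1 G2 #= dsum G3 G4 -> (a + b = c + d)%N.
Proof.
move=> h1 h2 h3 h4 e.
have e1 := dsum_card h1 h2; have e2 := dsum_card h3 h4.
apply/card_eq_II; apply: card_eq_trans (card_esym e1) _.
exact: card_eq_trans e e2.
Qed.

Lemma set3E (a b c : X) : [set a; b; c] = c |` [set a; b].
Proof. by apply/seteqP; split => z /=; tauto. Qed.

Lemma plane3 (Hr : ranked L) a b c : a <> b -> ~ hull L [set a; b] c ->
  has_rank L (hull L [set a; b; c]) 3.
Proof.
move=> ab nc; have := rank_add Hr (flat_hull L _) (rank2 L ab) nc.
by rewrite hullUr set3E.
Qed.


Lemma line_meet (A : set X) a b : flat L A -> A a -> ~ A b ->
  A `&` hull L [set a; b] = [set a].
Proof.
move=> fA Aa nAb; apply/seteqP; split; last first.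
  by move=> z ->; split => //; apply: sub_hull; left.
move=> z [Az hz] /=; apply: contrapT => za.
have ab : a <> b by move=> e; apply: nAb; rewrite -e.
have az : a <> z by move=> e; apply: za; rewrite e.
have := hull2_swap HL ab az hz => e.
apply: nAb; apply: (hull_min fA (A:=[set a; z])); first by move=> t [->|->].
by rewrite e; apply: sub_hull; right.
Qed.

Lemma wm_ranked : weakly_modular L -> ranked L.
Proof.
move=> wm A B n fA fB AB An Bn.
apply/seteqP; split => // b Bb; apply: contrapT => nAb.
have [[a Aa]|nA] := pselect (exists a, A a); last first.
  have A0 : A = set0 by apply/seteqP; split => // z Az; apply: nA; exists z.
  subst A; have n0 := rank_uniq An (rank0 L); subst n.
  case/has_rankP: Bn => [[C [BC /card_le0 C0]] _].
  by move: (BC b Bb); rewrite C0 hull0.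
have ab : a <> b by move=> e; apply: nAb; rewrite -e.
have [G1 [G2 [G3 [G4 [g1 g2 g3 g4 e]]]]] :=
  wm A (hull L [set a; b]) fA (flat_hull L _) (ex_intro _ a (conj Aa (sub_hull (or_introl erefl)))).
rewrite (line_meet fA Aa nAb) in g1.
have h1 := min_gen_card (rank1 L a) g1.
have h3 := min_gen_card An g3.
have h4 := min_gen_card (rank2 L ab) g4.
have rU : rkle L (A `|` hull L [set a; b]) n.
  apply: rkle_mono (proj1 (proj1 (has_rankP _ _ _) Bn)).
  move=> z [/AB //|]; apply: hull_min fB _ z => t [->|->] //; exact: AB.
have [m [hm mn]] := rank_ex rU.
have h2 := min_gen_card hm g2.
have := dsum_nat h1 h2 h3 h4 e; lia.
Qed.

Lemma wm_pc : weakly_modular L ->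
  forall P Q : set X, plane L P -> plane L Q -> has_rank L (P `|` Q) 4 ->
  ~ (exists p, P `&` Q = [set p]).
Proof.
move=> wm P Q [fP P3] [fQ Q3] PQ [p e].
have PQp : (P `&` Q) p by rewrite e.
have [G1 [G2 [G3 [G4 [g1 g2 g3 g4 ed]]]]] := wm P Q fP fQ (ex_intro _ p PQp).
rewrite e in g1.
have := dsum_nat (min_gen_card (rank1 L p) g1) (min_gen_card PQ g2)
  (min_gen_card P3 g3) (min_gen_card Q3 g4) ed.
by [].
Qed.


Lemma rkle4 a b c d : rkle L (hull L [set a; b; c; d]) 4.
Proof.
apply: rkle_hull; apply: rkle_set.
by apply: cardU1r; apply: cardU1r; apply: cardU1r; exact: card1le.
Qed.

Lemma pc_wr : ranked L ->
  (forall P Q : set X, plane L P -> plane L Q -> has_rank L (P `|` Q) 4 ->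
    ~ (exists p, P `&` Q = [set p])) -> weakly_regular L.
Proof.
move=> Hr pc A a b fA Aa nAb.
have ab : a <> b by move=> e; apply: nAb; rewrite -e.
apply/seteqP; split; last first.
  move=> w [x Ax hw]; apply: hull_mono hw => t [[->|->]|->].
  - by left.
  - by right.
  - by left.
apply: hull_min; last first.
  move=> t [At|->].
    by exists t => //; apply: sub_hull; right.
  by exists a => //; apply: sub_hull; left; right.
move=> y z [x Ax hy] [x' Ax' hz] yz w wl.
have sF1 : hull L [set a; b; x] `<=` hull L [set a; b; x; x'].
  by apply: hull_mono => t /= ; tauto.
have sF2 : hull L [set a; b; x'] `<=` hull L [set a; b; x; x'].
  by apply: hull_mono => t /= ; tauto.
have hF : hull L [set a; b; x; x'] w.
  exact: (flat_hull L _ y z (sF1 _ hy) (sF2 _ hz) yz w wl).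
have [hw|nhw] := pselect (hull L [set a; b] w).
  exists a => //; apply: hull_mono hw => t /=; tauto.
have [xa|xa] := pselect (x = a).
  subst x; exists x' => //.
  have hy' : hull L [set a; b; x'] y.
    by apply: hull_mono hy => t /=; tauto.
  exact: (flat_hull L _ y z hy' hz yz w wl).
have ax : a <> x by move=> e; apply: xa; rewrite e.
have [hx'|nx'] := pselect (hull L [set a; x] x').
  exists x => //.
  have hz' : hull L [set a; b; x] z.
    apply: hull_sub_hull hz => t [[->|->]|->].
    - by apply: sub_hull; left; left.
    - by apply: sub_hull; left; right.
    - by apply: hull_mono hx' => u /=; tauto.
  exact: (flat_hull L _ y z hy hz' yz w wl).
have P3 := plane3 Hr ax nx'.
have E3 := plane3 Hr ab nhw.
set Pi := hull L [set a; x; x'] in P3 *.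
set E := hull L [set a; b; w] in E3 *.
have PiA : Pi `<=` A by rewrite /Pi; apply: (hull_min fA) => t [[->|->]|->].
have EPF : E `|` Pi `<=` hull L [set a; b; x; x'].
  move=> t [Et|Pt].
    apply: hull_sub_hull Et => u [[->|->]|->] //.
    - by apply: sub_hull; left; left; left.
    - by apply: sub_hull; left; left; right.
  apply: hull_sub_hull Pt => u [[->|->]|->] //.
  - by apply: sub_hull; left; left; left.
  - by apply: sub_hull; left; right.
  - by apply: sub_hull; right.
have [m [hm m4]] := rank_ex (rkle_mono EPF (rkle4 a b x x')).
have m3 : (3 <= m)%N by apply: rank_mono P3 hm => t Pt; right.
have [em3|nm3] := eqVneq m 3.
  subst m; exfalso.
  have sub : Pi `<=` hull L (E `|` Pi) by move=> t Pt; apply: sub_hull; right.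
  have := Hr _ _ _ (flat_hull L _) (flat_hull L _) sub P3 (rank_hull hm) => eP.
  apply: nAb; apply: PiA; rewrite /Pi eP; apply: sub_hull; left.
  by apply: sub_hull; left; right.
have e4 : m = 4 by move/eqP: nm3; lia.
subst m.
have nsing := pc E Pi (conj (flat_hull L _) E3) (conj (flat_hull L _) P3) hm.
have [x'' [[Ex'' Px''] x''a]] : exists x'', (E `&` Pi) x'' /\ x'' <> a.
  apply: contrapT => H; apply: nsing; exists a.
  apply/seteqP; split.
    move=> t Et; apply: contrapT => ta; apply: H; by exists t.
  move=> t ->; split; apply: sub_hull; by left; left.
have Ax'' := PiA _ Px''.
have nx'' : ~ hull L [set a; b] x''.
  move=> H; apply: x''a.
  have : (A `&` hull L [set a; b]) x'' by [].
  by rewrite (line_meet fA Aa nAb).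
have P'' := plane3 Hr ab nx''.
have sub : hull L [set a; b; x''] `<=` E.
  apply: hull_min; first exact: flat_hull.
  move=> t [[->|->]|->] //.
  - by apply: sub_hull; left; left.
  - by apply: sub_hull; left; right.
have eE := Hr _ _ _ (flat_hull L _) (flat_hull L _) sub P'' E3.
exists x'' => //; rewrite eE; apply: sub_hull; by right.
Qed.

End Geom.

Lemma finite_ind_le T (P : set T -> Prop) :
  P set0 -> (forall F x, finite_set F -> P F -> P (x |` F)) ->
  forall n F, F #<= `I_n -> P F.
Proof.
move=> P0 PS; elim=> [|n IH] F Fn.
  by rewrite (card_le0 Fn).
have [f [fF fi]] := le_inj_nat Fn.
pose F' := [set x | F x /\ (f x < n)%N].
have F'n : F' #<= `I_n by apply: (inj_le (f := f)) => [x []//|x y]; rewrite !inE => -[Fx _] [Fy _]; apply: fi; rewrite inE.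
have fF' : finite_set F' by apply/finite_set_leP; exists n.
have [[x0 [Fx0 fx0]]|nx] := pselect (exists x, F x /\ f x = n).
  have -> : F = x0 |` F'.
    apply/seteqP; split => [x Fx|x [->//|[]//]].
    have := fF x Fx; rewrite /= ltnS leq_eqVlt => /orP[/eqP fxn|fxn].
      left; apply: fi; rewrite ?inE //; by rewrite fxn fx0.
    by right.
  by apply: PS => //; apply: IH.
have -> : F = F'; last by apply: IH.
apply/seteqP; split => [x Fx|x []//]; split => //.
have := fF x Fx; rewrite /= ltnS leq_eqVlt => /orP[/eqP fxn|//].
by exfalso; apply: nx; exists x.
Qed.

Lemma finite_ind T (P : set T -> Prop) :
  P set0 -> (forall F x, finite_set F -> P F -> P (x |` F)) ->
  forall F, finite_set F -> P F.
Proof.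
move=> P0 PS F /finite_set_leP[n Fn]; exact: finite_ind_le Fn.
Qed.

Lemma chain_fin T (I0 : set T) (F : set (set T)) : total_on F subset ->
  forall K, finite_set K -> K `<=` I0 `|` \bigcup_(J in F) J ->
  K `<=` I0 \/ exists J, F J /\ K `<=` I0 `|` J.
Proof.
move=> Ftot; apply: finite_ind.
  by move=> _; left.
move=> K x fK IH xK.
have := IH (fun t Kt => xK t (or_intror Kt)).
have [xI0|[J1 FJ1 xJ1]] := xK x (or_introl erefl).
  case=> [KI0|[J [FJ KJ]]].
    by left => t [->|/KI0].
  by right; exists J; split => // t [->|/KJ //]; left.
case=> [KI0|[J [FJ KJ]]].
  by right; exists J1; split => // t [->|/KI0 ?]; [right|left].
right; have [J1J|JJ1] := Ftot J1 J FJ1 FJ.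
  by exists J; split => // t [->|/KJ //]; right; exact: J1J.
exists J1; split => // t [->|/KJ [?|/JJ1 ?]]; by [right|left|right].
Qed.

Section Indep.
Variable X : Type.
Variable L : set (set X).
Hypothesis HL : is_liner L.
Hypothesis Hr : ranked L.

Definition indep (I : set X) := forall z, I z -> ~ hull L (I `\ z) z.

Lemma indep_sub I J : I `<=` J -> indep J -> indep I.
Proof.
move=> IJ iJ z Iz hz; apply: (iJ z (IJ z Iz)).
by apply: hull_mono hz => t [It tz]; split => //; exact: IJ.
Qed.

Lemma indep0 : indep set0.
Proof. by move=> z []. Qed.

Lemma indep_union I H : indep I ->
  (forall h, H h -> ~ hull L (I `|` (H `\ h)) h) -> indep (I `|` H).
Proof.
move=> iI hH z [Iz|Hz] hz; last first.
  apply: (hH z Hz); apply: hull_mono hz => t [[It|Ht] tz]; [left|right] => //.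
have key : forall F, finite_set F -> F `<=` H -> ~ hull L ((I `\ z) `|` F) z.
  apply: finite_ind.
    move=> _; rewrite setU0; exact: iI.
  move=> F h fF IH FhH hh.
  have FH : F `<=` H by move=> t Ft; apply: FhH; right.
  have nh := IH FH.
  have [Fh|nFh] := pselect (F h).
    apply: nh; apply: hull_mono hh => t [It|[->|Ft]]; [left|right|right] => //.
  have e : (I `\ z) `|` (h |` F) = h |` ((I `\ z) `|` F).
    by apply/seteqP; split => t /=; tauto.
  rewrite e in hh.
  have hx := exchange Hr hh nh.
  apply: (hH h (FhH h (or_introl erefl))); apply: hull_mono hx.
  move=> t [->|[[It _]|Ft]]; first by left.
    by left.
  by right; split => //; [exact: FH| move=> th; apply: nFh; rewrite -th].
have [G [fG GIH hG]] := hull_finitary hz.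
apply: (key (G `&` H)); first exact: finite_setIl.
  by move=> t [].
apply: hull_mono hG => t Gt; have [[It|Ht] tz] := GIH t Gt.
  by left.
by right.
Qed.

Lemma indep_add I a : indep I -> ~ hull L I a -> indep (a |` I).
Proof.
move=> iI na; rewrite setUC; apply: indep_union => // h ->.
have -> : [set a] `\ a = set0 by apply/seteqP; split => t // [].
by rewrite setU0.
Qed.

Lemma basis_ext I0 A : indep I0 -> I0 `<=` A ->
  exists I, [/\ I0 `<=` I, I `<=` A, indep I & A `<=` hull L I].
Proof.
move=> iI0 I0A.
pose P := [set J | J `<=` A /\ indep (I0 `|` J)].
have [|J [[JA iJ] Jmax]] := @Zorn_bigcup _ P.
  move=> F FP Ftot; split.
    by move=> z [J FJ Jz]; exact: (FP J FJ).1.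
  move=> z zI hz.
  have [G [fG GI hG]] := hull_finitary hz.
  have fK : finite_set (z |` G) by rewrite finite_setU; split => //; exact: finite_set1.
  have KI : z |` G `<=` I0 `|` \bigcup_(J in F) J.
    by move=> t [->//|/GI []].
  have [KI0|[J [FJ KJ]]] := chain_fin Ftot fK KI.
    apply: (iI0 z (KI0 z (or_introl erefl))); apply: hull_mono hG => t Gt.
    by split; [apply: KI0; right|exact: (GI t Gt).2].
  apply: ((FP J FJ).2 z (KJ z (or_introl erefl))); apply: hull_mono hG => t Gt.
  by split; [apply: KJ; right|exact: (GI t Gt).2].
exists (I0 `|` J); split.
- by move=> t It; left.
- by move=> t [/I0A|/JA].
- exact: iJ.
move=> a Aa; apply: contrapT => na.
apply: (Jmax (a |` J)).
  split; first by move=> t Jt; right.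
  move=> Jsub; apply: na; apply: sub_hull; right; apply: Jsub; by left.
split; first by move=> t [->|/JA].
have -> : I0 `|` (a |` J) = a |` (I0 `|` J) by apply/seteqP; split => t /=; tauto.
exact: indep_add.
Qed.

End Indep.

Section Inj.
Variable X : Type.
Variable L : set (set X).
Hypothesis HL : is_liner L.
Hypothesis Hr : ranked L.

Variables B C : set X.
Hypothesis iB : indep L B.
Hypothesis BC : B `<=` hull L C.

Let dom (R : set (X * X)) b := exists c, R (b, c).
Let rng (R : set (X * X)) c := exists b, R (b, c).
Let IR R := [set x | B x /\ ~ dom R x] `|` rng R.
Let Good R := [/\ (forall b c, R (b, c) -> B b /\ C c),
   (forall b c c', R (b, c) -> R (b, c') -> c = c'),
   (forall b b' c, R (b, c) -> R (b', c) -> b = b'),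
   (forall b c, R (b, c) -> B c -> dom R c) &
   indep L (IR R)].

Lemma chain_good : forall F : set (set (X * X)), F `<=` Good -> total_on F subset ->
  Good (\bigcup_(R in F) R).
Proof.
move=> F FP Ftot.
have big : forall R1 R2 p1 p2, F R1 -> F R2 -> R1 p1 -> R2 p2 ->
    exists R, [/\ F R, R p1 & R p2].
  move=> R1 R2 p1 p2 F1 F2 h1 h2; have [s|s] := Ftot R1 R2 F1 F2.
    by exists R2; split => //; exact: s.
  by exists R1; split => //; exact: s.
split.
- by move=> b c [R FR Rbc]; have [+ _ _ _ _] := FP R FR; apply.
- move=> b c c' [R1 F1 h1] [R2 F2 h2].
  have [R [FR h1' h2']] := big _ _ _ _ F1 F2 h1 h2.
  by have [_ H _ _ _] := FP R FR; exact: H _ _ _ h1' h2'.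
- move=> b b' c [R1 F1 h1] [R2 F2 h2].
  have [R [FR h1' h2']] := big _ _ _ _ F1 F2 h1 h2.
  by have [_ _ H _ _] := FP R FR; exact: H _ _ _ h1' h2'.
- move=> b c [R FR Rbc] Bc; have [_ _ _ + _] := FP R FR.
  by move=> /(_ b c Rbc Bc) [c' h]; exists c'; exists R.
move=> z zI hz.
have [G [fG GI hG]] := hull_finitary hz.
have fK : finite_set (z |` G) by rewrite finite_setU; split => //; exact: finite_set1.
pose F' := [set rng R | R in F].
have F'tot : total_on F' subset.
  move=> _ _ [R1 F1 <-] [R2 F2 <-]; have [s|s] := Ftot R1 R2 F1 F2.
    by left => t [b h]; exists b; exact: s.
  by right => t [b h]; exists b; exact: s.
have KI : z |` G `<=` [set x | B x /\ ~ dom (\bigcup_(R in F) R) x] `|` \bigcup_(J in F') J.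
  move=> t Kt; have : IR (\bigcup_(R in F) R) t by case: Kt => [->//|/GI []].
  case=> [?|[b [R FR Rbt]]]; first by left.
  by right; exists (rng R); [exists R|exists b].
have [K0|[_ [[R0 FR0 <-] KJ]]] := chain_fin F'tot fK KI.
  apply: (iB (K0 z (or_introl erefl)).1); apply: hull_mono hG => t Gt.
  by split; [exact: (K0 t (or_intror Gt)).1|exact: (GI t Gt).2].
have [_ _ _ _ iR0] := FP R0 FR0.
have sub : [set x | B x /\ ~ dom (\bigcup_(R in F) R) x] `|` rng R0 `<=` IR R0.
  move=> t [[Bt nd]|rt]; last by right.
  left; split => // -[c h]; apply: nd; exists c; by exists R0.
apply: (iR0 z (sub z (KJ z (or_introl erefl)))); apply: hull_mono hG => t Gt.
by split; [exact: sub _ (KJ t (or_intror Gt))|exact: (GI t Gt).2].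
Qed.

Lemma indep_le : B #<= C.
Proof.
have [R [GR Rmax]] := @Zorn_bigcup _ Good chain_good.
have [R1 R2 R3 R4 iR] := GR.
have full : forall b, B b -> dom R b.
  move=> b Bb; apply: contrapT => nd.
  have Ib : IR R b by left.
  have nb := iR b Ib.
  have rsub : rng R `<=` IR R `\ b.
    move=> t rt; split; first by right.
    move=> /= tb; subst t; case: rt => b' h; exact: nd (R4 _ _ h Bb).
  have [c [Cc nc]] : exists c, C c /\ ~ hull L (IR R `\ b) c.
    apply: contrapT => H; apply: nb.
    have : hull L C `<=` hull L (IR R `\ b).
      apply: hull_sub_hull => c Cc; apply: contrapT => nc; apply: H; by exists c.
    by apply; apply: BC.
  pose R' := R `|` [set (b, c)].
  apply: (Rmax R').
    split; first by move=> p Rp; left.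
    move=> /(_ (b, c) (or_intror erefl)) Rbc; apply: nd; by exists c.
  split.
  - move=> b1 c1 [/R1//|[-> ->]]; by [].
  - move=> b1 c1 c2 [h1|[e1 e2]] [h2|[e1' e2']].
    + exact: R2 h1 h2.
    + by exfalso; subst; apply: nd; exists c1.
    + by exfalso; subst; apply: nd; exists c2.
    + by rewrite e2 e2'.
  - move=> b1 b2 c1 [h1|[e1 e2]] [h2|[e1' e2']].
    + exact: R3 h1 h2.
    + exfalso; subst; apply: nc; apply: sub_hull; apply: rsub; by exists b1.
    + exfalso; subst; apply: nc; apply: sub_hull; apply: rsub; by exists b2.
    + by rewrite e1 e1'.
  - move=> b1 c1 [h1|[e1 e2]] Bc1.
      by have [c' h] := R4 _ _ h1 Bc1; exists c'; left.
    subst b1 c1.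
    have [cb|cb] := pselect (c = b).
      by exists c; right; rewrite cb.
    have [[c' h]|ndc] := pselect (dom R c).
      by exists c'; left.
    by exfalso; apply: nc; apply: sub_hull; split => //; left.
  - apply: (@indep_sub _ _ _ (c |` (IR R `\ b))).
      move=> t [[Bt nd'] | [b1 [h1|[e1 e2]]]].
      + right; split; first by left; split => // -[c' h]; apply: nd'; exists c'; left.
        by move=> tb; apply: nd'; exists c; right; rewrite tb.
      + by right; apply: rsub; exists b1.
      + by left.
    apply: indep_add => //.
    by apply: (@indep_sub _ _ _ (IR R)) => // t [].
have [[b0 Bb0]|nB] := pselect (exists b, B b); last first.
  have -> : B = set0 by apply/seteqP; split => // t Bt; apply: nB; exists t.
  exact: card_ge0.
have H : forall b, exists c, B b -> R (b, c).
  move=> b; have [Bb|nBb] := pselect (B b); last by exists b.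
  by have [c h] := full b Bb; exists c.
have [f hf] := @choice X X (fun b c => B b -> R (b, c)) H.
apply: (inj_le (f := f)).
  by move=> b Bb; exact: (R1 _ _ (hf b Bb)).2.
move=> x y; rewrite !inE => Bx By e.
by apply: (R3 x y (f x) (hf x Bx)); rewrite e; exact: hf.
Qed.

End Inj.

Section Main.
Variable X : Type.
Variable L : set (set X).
Hypothesis HL : is_liner L.
Hypothesis Hr : ranked L.

Lemma basis_min I S : indep L I -> I `<=` S -> S `<=` hull L I -> min_gen L S I.
Proof.
move=> iI IS SI; split => // C SC.
apply: (indep_le Hr iI); exact: subset_trans SC.
Qed.

Hypothesis Hw : weakly_regular L.

Lemma WRcap A B c b : flat L A -> flat L B -> A c -> B c -> B b ->
  hull L (A `|` [set b]) `&` B `<=` hull L ((A `&` B) `|` [set b]).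
Proof.
move=> fA fB Ac Bc Bb y [hy By].
have [Ab|nAb] := pselect (A b).
  have : hull L (A `|` [set b]) `<=` A by apply: hull_min fA _ => t [//|->].
  by move=> /(_ y hy) Ay; apply: sub_hull; left.
rewrite (Hw fA Ac nAb) in hy; case: hy => x Ax hx.
have [hcb|nhcb] := pselect (hull L [set c; b] y).
  by apply: hull_mono hcb => t [->|->]; [left|right].
have hx' : hull L (x |` [set c; b]) y by rewrite -set3E.
have := exchange Hr hx' nhcb => hxy.
have Bx : B x.
  apply: (hull_min fB (A:= y |` [set c; b])) hxy.
  by move=> t [->|[->|->]].
apply: hull_mono hx => t [[->|->]|->]; by [left|right|left].
Qed.

Lemma keyF A B c : flat L A -> flat L B -> A c -> B c ->
  forall F, finite_set F -> F `<=` B ->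
  hull L (A `|` F) `&` B `<=` hull L ((A `&` B) `|` F).
Proof.
move=> fA fB Ac Bc; apply: finite_ind.
  by rewrite !setU0 (hull_flat fA) => _ y [Ay By]; apply: sub_hull.
move=> F x fF IH xFB.
have FB : F `<=` B by move=> t Ft; apply: xFB; right.
have Bx : B x by apply: xFB; left.
have e1 : hull L (A `|` (x |` F)) = hull L (hull L (A `|` F) `|` [set x]).
  by rewrite hullUl; congr hull; apply/seteqP; split => t /=; tauto.
have e2 : hull L ((A `&` B) `|` (x |` F)) = hull L (hull L ((A `&` B) `|` F) `|` [set x]).
  by rewrite hullUl; congr hull; apply/seteqP; split => t /=; tauto.
rewrite e1 e2 => y hy.
have Ac' : hull L (A `|` F) c by apply: sub_hull; left.
have := WRcap (flat_hull L _) fB Ac' Bc Bx hy.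
by apply: hull_mono => t [[/= ht Bt]|->]; [left; exact: IH|right].
Qed.

Lemma wr_wm : weakly_modular L.
Proof.
move=> A B fA fB [c [Ac Bc]].
have [G1 [_ G1C iG1 CG1]] := basis_ext Hr (@indep0 _ L) (sub0set (A `&` B)).
have [IA [G1A IAA iIA AIA]] := basis_ext Hr iG1 (fun t Gt => (G1C t Gt).1).
have [IB [G1B IBB iIB BIB]] := basis_ext Hr iG1 (fun t Gt => (G1C t Gt).2).
pose HB := [set t | IB t /\ ~ G1 t].
pose G2 := IA `|` HB.
have nIAB : forall t, IA t -> IB t -> G1 t.
  move=> t IAt IBt; apply: contrapT => nG.
  apply: (iIA t IAt); apply: (hull_mono _ (CG1 t (conj (IAA t IAt) (IBB t IBt)))).
  move=> u Gu; split; first exact: G1A.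
  by move=> /= ut; apply: nG; rewrite -ut.
have iG2 : indep L G2.
  apply: indep_union => // h [IBh nGh] hh.
  have hh' : hull L (A `|` (HB `\ h)) h.
    by apply: hull_mono hh => t [/IAA|]; [left|right].
  have [G [fG GS hG]] := hull_finitary hh'.
  pose F := G `&` (HB `\ h).
  have fF : finite_set F by apply: finite_setIl.
  have FB : F `<=` B by move=> t [_ [[/IBB]]].
  have h1 : hull L (A `|` F) h.
    apply: hull_mono hG => t Gt; have [At|Ht] := GS t Gt; [left|right] => //.
  have := keyF fA fB Ac Bc fF FB (conj h1 (IBB h IBh)) => h2.
  apply: (iIB h IBh); apply: (hull_sub_hull _ h2) => t [[At Bt]|[_ [[IBt _] th]]].
    apply: (hull_mono _ (CG1 t (conj At Bt))) => u Gu; split; first exact: G1B.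
    by move=> /= uh; apply: nGh; rewrite -uh.
  by apply: sub_hull; split.
have G2AB : G2 `<=` A `|` B by move=> t [/IAA|[/IBB]]; [left|right].
have ABG2 : A `|` B `<=` hull L G2.
  move=> t [/AIA|/BIB]; apply: hull_mono => u; first by left.
  by move=> IBu; have [Gu|nGu] := pselect (G1 u); [left; exact: G1A|right].
exists G1, G2, IA, IB; split.
- exact: basis_min.
- exact: basis_min.
- exact: basis_min.
- exact: basis_min.
pose hf (s : X + X) := match s with
  | inl t => inl t
  | inr t => if `[< G1 t >] then inr t else if `[< IA t >] then inl t else inr t end.
pose pr (s : X + X) := match s with inl t => t | inr t => t end.
have prh : forall s, pr (hf s) = pr s.
  by move=> [t|t] //=; case: asboolP => _ //; case: asboolP.
have hi : {in dsum G1 G2 &, injective hf}.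
  move=> [x|x] [y|y]; rewrite !inE => Dx Dy e; have := congr1 pr e;
    rewrite !prh /= => exy; subst y => //.
  - move: e => /=; case: asboolP => Gy //; exfalso; apply: Gy.
    by case: Dx => [[x' Gx' [<-]]|[? _ //]].
  - move: e => /=; case: asboolP => Gy //; exfalso; apply: Gy.
    by case: Dy => [[x' Gx' [<-]]|[? _ //]].
have img : hf @` dsum G1 G2 = dsum IA IB.
  apply/seteqP; split.
    move=> _ [s Ds <-]; case: Ds => [[x' Gx' <-]|[x' Gx' <-]] /=.
    - by left; exists x' => //; exact: G1A.
    - case: asboolP => Gx; first by right; exists x' => //; exact: G1B.
      case: asboolP => IAx; first by left; exists x'.
      by case: Gx' => [//|[IBx _]]; right; exists x'.
  move=> _ [[t IAt <-]|[t IBt <-]].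
    have [Gt|nGt] := pselect (G1 t).
      by exists (inl t) => //; left; exists t.
    exists (inr t); first by right; exists t => //; left.
    by rewrite /= (asboolF nGt) (asboolT IAt).
  have [Gt|nGt] := pselect (G1 t).
    exists (inr t); first by right; exists t => //; left; exact: G1A.
    by rewrite /= (asboolT Gt).
  have nIAt : ~ IA t by move=> IAt; apply: nGt; exact: nIAB.
  exists (inr t); first by right; exists t => //; right.
  by rewrite /= (asboolF nGt) (asboolF nIAt).
rewrite -img card_eq_sym; exact: inj_card_eq hi.
Qed.

End Main.

Close Scope card_scope.
Unset Implicit Arguments.

Theorem theorem5p4p1 (X : Type) (L : set (set X)) :
  is_liner L ->
  (weakly_modular L <-> ranked L /\ weakly_regular L) /\
  (ranked L /\ weakly_regular L <->
     ranked L /\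
     (forall P Q : set X, plane L P -> plane L Q ->
        has_rank L (P `|` Q) 4 ->
        ~ (exists p, P `&` Q = [set p]))).
Proof.
move=> HL; split; split.
- move=> wm; have Hr := wm_ranked HL wm; split => //.
  exact: pc_wr HL Hr (wm_pc wm).
- by move=> [Hr Hw]; exact: wr_wm Hr Hw.
- move=> [Hr Hw]; split => //; exact: wm_pc (wr_wm Hr Hw).
- by move=> [Hr pc]; split => //; exact: pc_wr HL Hr pc.
Qed.
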